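(* Let $\Sigma$ be a set of identities (equalities between terms) of a fixed finite algebraic type such that the variety of all algebras of that type satisfying $\Sigma$ is locally finite. Then the pseudovariety $\mathsf V$ of all finite algebras satisfying $\Sigma$ is strong.
   Context: A pseudovariety is a nonempty class of finite algebras of a fixed finite type closed under homomorphic images, subalgebras and finite direct products. A variety is locally finite if its finitely generated algebras are finite. For a pseudovariety $\mathsf U$ and finite set $A$, $\Omega_A\mathsf U$ is the free pro-$\mathsf U$ algebra on $A$ (inverse limit of the $A$-generated members of $\mathsf U$; every map from $A$ into a pro-$\mathsf U$ algebra extends uniquely to a continuous homomorphism). A $\mathsf U$-pseudoidentity is $u=v$ with $u,v\in\Omega_B\mathsf U$, $B$ finite; it holds in $T\in\mathsf U$ if both sides agree under every continuous homomorphism $\Omega_B\mathsf U\to T$. For a set $\Gamma$ of $\mathsf U$-pseudoidentities, $[\![\Gamma]\!]_{\mathsf U}$ denotes the members of $\mathsf U$ satisfying $\Gamma$. Provability: for finite $A$ define $\Gamma_\alpha\subseteq\Omega_A\mathsf U\times\Omega_A\mathsf U$: $\Gamma_0$ is the set of pairs $(\mathbf t(\varphi(u),w_1,\dots,w_n),\mathbf t(\varphi(v),w_1,\dots,w_n))$ with $u=v$ or $v=u$ in $\Gamma$, $u,v\in\Omega_B\mathsf U$, $\varphi:\Omega_B\mathsf U\to\Omega_A\mathsf U$ a continuous homomorphism, $\mathbf t$ a term, $w_i\in\Omega_A\mathsf U$; $\Gamma_{2\alpha+1}$ is the transitive closure of $\Gamma_{2\alpha}$; $\Gamma_{2\alpha+2}$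 the topological closure of $\Gamma_{2\alpha+1}$; unions at limit ordinals. $u=v$ is provable from $\Gamma$ if $(u,v)\in\bigcup_\alpha\Gamma_\alpha$. The pseudovariety $\mathsf U$ is strong if for every set $\Gamma$ of $\mathsf U$-pseudoidentities, every $\mathsf U$-pseudoidentity valid in $[\![\Gamma]\!]_{\mathsf U}$ is provable from $\Gamma$. *)

(* Defs.v *)
From HB Require Import structures.
From Stdlib Require Import FunctionalExtensionality List.
From mathcomp Require Import all_boot.


Set Implicit Arguments.
Unset Strict Implicit.
Unset Printing Implicit Defensive.

Record signature := Signature { op : finType; arity : op -> nat }.

Section UA.
Variable L : signature.

Record algebra := Algebra {
  carrier :> Type;
  interp : forall o : op L, ('I_(arity o) -> carrier) -> carrier }.
Arguments interp : clear implicits.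

Record finalgebra := FinAlgebra {
  fcarrier :> finType;
  finterp : forall o : op L, ('I_(arity o) -> fcarrier) -> fcarrier }.

Definition alg_of_fin (T : finalgebra) : algebra := @Algebra (fcarrier T) (@finterp T).
Coercion alg_of_fin : finalgebra >-> algebra.

Inductive term (X : Type) : Type :=
| Var : X -> term X
| App : forall o : op L, ('I_(arity o) -> term X) -> term X.

Fixpoint eval (X : Type) (A : algebra) (e : X -> A) (t : term X) : A :=
  match t with
  | Var x => e x
  | App o f => interp A o (fun i => eval e (f i))
  end.

Definition is_hom (A B : algebra) (h : A -> B) : Prop :=
  forall (o : op L) (args : 'I_(arity o) -> A),
    h (interp A o args) = interp B o (fun i => h (args i)).

Definition identity := (term nat * term nat)%type.

Definition satisfies (A : algebra) (Sigma : identity -> Prop) : Prop :=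
  forall p, Sigma p -> forall e : nat -> A, eval e p.1 = eval e p.2.

Definition locally_finite (Sigma : identity -> Prop) : Prop :=
  forall A : algebra, satisfies A Sigma ->
  forall (k : nat) (g : 'I_k -> A),
    (forall a : A, exists t : term 'I_k, eval g t = a) ->
    exists l : list A, forall a : A, List.In a l.

Section Pseudo.
Variable Sigma : identity -> Prop.

Definition inV (T : finalgebra) : Prop := satisfies T Sigma.

Section Omega.
Variable A : finType.

(* Indices of the inverse system: A-generated members of V, represented
   (up to isomorphism) on carriers 'I_n. *)
Record vindex := VIndex {
  vn : nat;
  vint : forall o : op L, ('I_(arity o) -> 'I_vn) -> 'I_vn;
  vsat : satisfies (@Algebra 'I_vn vint) Sigma;
  vgen : A -> 'I_vn;
  vgenP : forall x : 'I_vn, exists t : term A, eval (A := @Algebra 'I_vn vint) vgen t = x }.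

Arguments vint : clear implicits.
Arguments vgen : clear implicits.
Definition valg (j : vindex) : algebra := @Algebra 'I_(vn j) (@vint j).

(* Omega_A V: the inverse limit (compatible families) *)
Record omega := Omega {
  ocomp : forall j : vindex, 'I_(vn j);
  ocompat : forall (j k : vindex) (h : 'I_(vn j) -> 'I_(vn k)),
     is_hom (A := valg j) (B := valg k) h ->
     (forall a, h (vgen j a) = vgen k a) -> h (ocomp j) = ocomp k }.

Arguments ocomp : clear implicits.
Lemma omega_op_compat (o : op L) (args : 'I_(arity o) -> omega) :
  forall (j k : vindex) (h : 'I_(vn j) -> 'I_(vn k)),
     is_hom (A := valg j) (B := valg k) h ->
     (forall a, h (vgen j a) = vgen k a) ->
     h (vint j o (fun i => ocomp (args i) j)) = vint k o (fun i => ocomp (args i) k).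
Proof.
move=> j k h hh hg; rewrite (hh o (fun i => ocomp (args i) j)) /=.
congr (vint k o); apply: functional_extensionality => i.
exact: ocompat.
Qed.

Definition omega_op (o : op L) (args : 'I_(arity o) -> omega) : omega :=
  @Omega (fun j => vint j o (fun i => ocomp (args i) j)) (@omega_op_compat o args).

Definition Omega_alg : algebra := @Algebra omega omega_op.

(* product topology (discrete finite factors): agreement on finitely many indices *)
Definition agree (F : list vindex) (x y : omega) : Prop :=
  forall j, List.In j F -> ocomp x j = ocomp y j.

Definition in_closure (R : omega -> omega -> Prop) (u v : omega) : Prop :=
  forall F : list vindex, exists u' v', R u' v' /\ agree F u u' /\ agree F v v'.

Definition continuous_to (T : Type) (f : omega -> T) : Prop :=
  forall x : omega, exists F : list vindex, forall y, agree F x y -> f y = f x.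

End Omega.

Arguments Omega_alg : clear implicits.

Definition continuous_om (B A : finType) (f : omega B -> omega A) : Prop :=
  forall (x : omega B) (j : vindex A), exists F : list (vindex B),
    forall y, agree F x y -> ocomp (f y) j = ocomp (f x) j.

Definition cont_hom (B A : finType) (f : omega B -> omega A) : Prop :=
  is_hom (A := Omega_alg B) (B := Omega_alg A) f /\ continuous_om f.

Definition holds_in (T : finalgebra) (B : finType) (u v : omega B) : Prop :=
  forall f : omega B -> T,
    is_hom (A := Omega_alg B) (B := T) f -> continuous_to f -> f u = f v.

Definition pseudo_set := forall B : finType, omega B -> omega B -> Prop.

Definition models (Gamma : pseudo_set) (T : finalgebra) : Prop :=
  inV T /\ forall B (u v : omega B), Gamma B u v -> holds_in T u v.

Section Provability.
Variables (Gamma : pseudo_set) (A : finType).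

Definition gamma0 (x y : omega A) : Prop :=
  exists (B : finType) (u v : omega B), (@Gamma B u v \/ @Gamma B v u) /\
  exists phi : omega B -> omega A, cont_hom phi /\
  exists (n : nat) (t : term (option 'I_n)) (w : 'I_n -> omega A),
    x = eval (A := Omega_alg A) (fun z => match z with None => phi u | Some i => w i end) t /\
    y = eval (A := Omega_alg A) (fun z => match z with None => phi v | Some i => w i end) t.

(* union of the transfinite sequence Gamma_alpha = least relation containing
   Gamma_0 (and the diagonal) closed under transitivity and
   topological closure *)
Inductive provable : omega A -> omega A -> Prop :=
| pv_refl x : provable x x
| pv_base x y : gamma0 x y -> provable x y
| pv_trans x y z : provable x y -> provable y z -> provable x z
| pv_clos u v :
    (forall F : list (vindex A), exists u' v',
        provable u' v' /\ agree F u u' /\ agree F v v') -> provable u v.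

End Provability.

Definition strong : Prop :=
  forall (Gamma : pseudo_set) (A : finType) (u v : omega A),
    (forall T : finalgebra, models Gamma T -> holds_in T u v) ->
    provable Gamma u v.

End Pseudo.
End UA.

(* Main.v *)
From HB Require Import structures.
Require Import Defs.
From mathcomp Require Import all_boot.
From Stdlib Require Import FunctionalExtensionality ClassicalEpsilon ProofIrrelevance.

Set Implicit Arguments.
Unset Strict Implicit.
Unset Printing Implicit Defensive.

Definition pb (P : Prop) : bool := if excluded_middle_informative P then true else false.
Lemma pbP P : reflect P (pb P).
Proof. rewrite /pb; case: excluded_middle_informative => h; constructor; done. Qed.
Definition ceq (T : Type) : Type := T.
HB.instance Definition _ (T : Type) := hasDecEq.Build (ceq T) (fun x y => @pbP (x = y)).

Definition fsig (T : finType) (P : pred T) := {x : T | P x}.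
HB.instance Definition _ (T : finType) (P : pred T) :=
  [isSub for (@proj1_sig T P : @fsig T P -> T)].
HB.instance Definition _ (T : finType) (P : pred T) := [Finite of @fsig T P by <:].

Lemma In_mem (T : eqType) (x : T) (l : seq T) : List.In x l <-> x \in l.
Proof.
elim: l => [|a l IH] //=; rewrite in_cons; split.
- by case=> [->|/IH h]; apply/orP; [left|right].
- by case/orP => [/eqP->|/IH h]; [left|right].
Qed.

Lemma sig_eq (T : Type) (P : T -> Prop) (a b : sig P) : sval a = sval b -> a = b.
Proof.
case: a => x px; case: b => y py /= E; subst y; f_equal; apply: proof_irrelevance.
Qed.

Lemma fin_inj (S : Type) (T : finType) (f : S -> T) :
  injective f -> exists l : list S, forall s, List.In s l.
Proof.
move=> finj.
pose g (t : T) : option (ceq S) :=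
  match excluded_middle_informative (exists s, f s = t) with
  | left H => Some (proj1_sig (constructive_indefinite_description _ H))
  | right _ => None end.
exists (pmap g (enum T)) => s.
apply/(In_mem (T := ceq S)); rewrite mem_pmap.
have -> : Some (s : ceq S) = g (f s).
  rewrite /g; case: excluded_middle_informative => [H|[]]; last by exists s.
  by case: constructive_indefinite_description => s' /= /finj ->.
by apply: map_f; rewrite mem_enum.
Qed.

Section UA.
Variable L : signature.

Fixpoint subst X Y (s : X -> term L Y) (t : term L X) : term L Y :=
  match t with Var x => s x | @App _ _ o f => @App _ _ o (fun i => subst s (f i)) end.

Lemma eval_subst X Y (A : algebra L) (e : Y -> A) (s : X -> term L Y) t :
  eval e (subst s t) = eval (fun x => eval e (s x)) t.
Proof.
elim: t => [x|o f IH] //=; congr (interp _); apply: functional_extensionality => i; exact: IH.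
Qed.

Lemma eval_ext X (A : algebra L) (e1 e2 : X -> A) t :
  (forall x, e1 x = e2 x) -> eval e1 t = eval e2 t.
Proof. by move=> h; rewrite (functional_extensionality _ _ h). Qed.

Lemma eval_hom (A B : algebra L) (h : A -> B) : is_hom h ->
  forall X (e : X -> A) t, h (eval e t) = eval (fun x => h (e x)) t.
Proof.
move=> hh X e; elim=> [x|o f IH] //=; rewrite hh; congr (interp _).
apply: functional_extensionality => i; exact: IH.
Qed.

Section Gsub.
Variables (T : algebra L) (X : Type) (g : X -> T).
Definition gcar := {z : T | exists t : term L X, eval g t = z}.
Lemma gsub_op_proof o (args : 'I_(arity o) -> gcar) :
  exists t, eval g t = @interp _ T o (fun i => sval (args i)).
Proof.
exists (@App _ _ o (fun i => proj1_sig (constructive_indefinite_description _ (proj2_sig (args i))))).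
rewrite /=; congr (interp _); apply: functional_extensionality => i.
by case: constructive_indefinite_description.
Qed.
Definition gsub_op o (args : 'I_(arity o) -> gcar) : gcar :=
  exist _ (@interp _ T o (fun i => sval (args i))) (gsub_op_proof args).
Definition gsub : algebra L := @Algebra L gcar gsub_op.
Lemma gsub_val_hom : is_hom (A := gsub) (B := T) (@proj1_sig _ _).
Proof. by []. Qed.
Definition gsub_gen (x : X) : gsub := exist _ (g x) (ex_intro _ (Var L x) erefl).
Lemma gsub_eval t : sval (eval gsub_gen t) = eval g t.
Proof. by rewrite (eval_hom gsub_val_hom). Qed.
Lemma gsub_generated (z : gsub) : exists t, eval gsub_gen t = z.
Proof.
case: z => w [t Ht]; exists t; apply: sig_eq; by rewrite gsub_eval.
Qed.
Lemma gsub_sat Sigma : satisfies T Sigma -> satisfies gsub Sigma.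
Proof.
move=> hT p hp e; apply: sig_eq; rewrite !(eval_hom gsub_val_hom); exact: hT.
Qed.
End Gsub.


Section Pseudo.
Variable Sigma : identity L -> Prop.

Lemma to_vindex (A : finType) (S : algebra L) (gen : A -> S) :
  satisfies S Sigma -> (forall s, exists t, eval gen t = s) ->
  (exists l : list S, forall s, List.In s l) ->
  exists (j : vindex Sigma A) (enc : S -> 'I_(vn j)) (dec : 'I_(vn j) -> S),
    cancel enc dec /\ cancel dec enc /\ is_hom (A := S) (B := valg j) enc /\
    (forall a, enc (gen a) = vgen j a).
Proof.
move=> hS hgen [l hl].
pose l' : seq (ceq S) := undup (l : seq (ceq S)).
have memS : forall s : S, (s : ceq S) \in l'.
  by move=> s; rewrite mem_undup; apply/In_mem.
pose n := size l'.
have encP : forall s : S, index (s : ceq S) l' < n by move=> s; rewrite index_mem.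
pose enc (s : S) : 'I_n := Ordinal (encP s).
have enc_inj : injective enc.
  move=> s1 s2 /(congr1 val) /= E.
  have h1 := nth_index (s1 : ceq S) (memS s1).
  by rewrite E (nth_index (s1 : ceq S) (memS s2)) in h1.
have enc_surj : forall i : 'I_n, exists s, enc s = i.
  move=> i.
  have [x0 _] : exists x0 : S, True.
    have hpos : 0 < size (l : seq (ceq S)).
      exact: leq_trans (leq_ltn_trans (leq0n i) (ltn_ord i)) (size_undup _).
    by move: hpos; case: (l) => [|x0 r] // _; exists x0.
  exists (nth (x0 : ceq S) l' i); apply: val_inj => /=.
  by rewrite index_uniq // undup_uniq.
pose dec (i : 'I_n) : S := proj1_sig (constructive_indefinite_description _ (enc_surj i)).
have decK : cancel dec enc.
  by move=> i; rewrite /dec; case: constructive_indefinite_description.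
have encK : cancel enc dec by move=> s; apply: enc_inj; rewrite decK.
pose vint o (args : 'I_(arity o) -> 'I_n) : 'I_n := enc (@interp _ S o (fun i => dec (args i))).
have ehom : is_hom (A := S) (B := @Algebra L 'I_n vint) enc.
  move=> o args /=; rewrite /vint; congr (enc (interp _)).
  by apply: functional_extensionality => i; rewrite encK.
have vsat : satisfies (@Algebra L 'I_n vint) Sigma.
  move=> p hp e.
  have -> : e = (fun x => enc (dec (e x))).
    by apply: functional_extensionality => x; rewrite decK.
  rewrite -!(eval_hom ehom); congr enc; exact: hS.
have vgenP : forall x : 'I_n,
    exists t, eval (A := @Algebra L 'I_n vint) (fun a => enc (gen a)) t = x.
  move=> x; have [t ht] := hgen (dec x); exists t.
  by rewrite -(eval_hom ehom) ht decK.
exists (@VIndex L Sigma A n vint vsat (fun a => enc (gen a)) vgenP), enc, dec.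
by do ! split.
Qed.


Definition gens (A : finType) (a : A) : omega Sigma A :=
  @Omega L Sigma A (fun j => vgen j a) (fun j k h _ hg => hg a).

Lemma omega_ext A (x y : omega Sigma A) : (forall j, ocomp x j = ocomp y j) -> x = y.
Proof.
case: x => cx px; case: y => cy py /= H.
have E : cx = cy := functional_extensionality_dep _ _ H.
subst cy; f_equal; apply: proof_irrelevance.
Qed.

Lemma ocomp_eval A X (e : X -> omega Sigma A) t j :
  ocomp (eval (A := Omega_alg Sigma A) e t) j =
  eval (A := valg j) (fun x => ocomp (e x) j) t.
Proof.
elim: t => [x|o f IH] //=; congr (@vint _ _ _ j o).
by apply: functional_extensionality => i; exact: IH.
Qed.

Lemma Omega_sat A : satisfies (Omega_alg Sigma A) Sigma.
Proof.
move=> p hp e; apply: omega_ext => j; rewrite !ocomp_eval; exact: (@vsat _ _ _ j).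
Qed.

Variable hLF : locally_finite Sigma.

Lemma omega_struct A : exists J0 : vindex Sigma A, exists l : list (omega Sigma A),
  (forall x y : omega Sigma A, ocomp x J0 = ocomp y J0 -> x = y) /\
  (forall x, List.In x l) /\
  (forall x, exists t, eval (A := Omega_alg Sigma A) (@gens A) t = x).
Proof.
pose SA := gsub (T := Omega_alg Sigma A) (@gens A).
pose gA : A -> SA := @gsub_gen (Omega_alg Sigma A) A (@gens A).
have SAsat : satisfies SA Sigma := gsub_sat (@Omega_sat A).
have [lS hlS] : exists l : list SA, forall s, List.In s l.
  have := @hLF SA SAsat #|A| (fun i => gA (enum_val i)); apply.
  move=> z; have [t <-] := gsub_generated z.
  exists (subst (fun a => Var L (enum_rank a)) t); rewrite eval_subst /=.
  have -> : (fun x : A => gA (enum_val (enum_rank x))) = gA.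
    by apply: functional_extensionality => a; rewrite enum_rankK.
  by [].
have [J0 [enc [dec [encK [decK [ehom egen]]]]]] :=
  @to_vindex A SA gA SAsat (@gsub_generated (Omega_alg Sigma A) A (@gens A)) (ex_intro _ lS hlS).
have dhom : is_hom (A := valg J0) (B := SA) dec.
  move=> o args; apply: (can_inj encK); rewrite decK ehom; congr (@vint _ _ _ J0 o).
  by apply: functional_extensionality => i; rewrite decK.
have key : forall x : omega Sigma A, x = sval (dec (ocomp x J0)).
  move=> x; apply: omega_ext => j.
  pose h (i : 'I_(vn J0)) := ocomp (sval (dec i)) j.
  have hh : is_hom (A := valg J0) (B := valg j) h.
    by move=> o args; rewrite /h dhom.
  have hg : forall a, h (vgen J0 a) = vgen j a by move=> a; rewrite /h -egen encK.
  by rewrite -(ocompat x hh hg).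
exists J0, (List.map (@proj1_sig _ _) lS); split; last split.
- by move=> x y E; rewrite (key x) (key y) E.
- by move=> x; rewrite (key x); apply: List.in_map; exact: hlS.
- by move=> x; rewrite (key x); case: (dec _) => w [t ht] /=; exists t.
Qed.


Lemma omega_gen A (x : omega Sigma A) :
  exists t, eval (A := Omega_alg Sigma A) (@gens A) t = x.
Proof. by have [_ [_ [_ [_ h]]]] := omega_struct A; exact: h. Qed.

Lemma omega_discrete A : exists J0 : vindex Sigma A,
  forall x y : omega Sigma A, ocomp x J0 = ocomp y J0 -> x = y.
Proof. by have [J0 [_ [h _]]] := omega_struct A; exists J0. Qed.

Lemma omega_fin A : exists l : list (omega Sigma A), forall x, List.In x l.
Proof. by have [_ [l [_ [h _]]]] := omega_struct A; exists l. Qed.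

Lemma free_wd (B A : finType) (y : B -> omega Sigma A) t1 t2 :
  eval (A := Omega_alg Sigma B) (@gens B) t1 = eval (A := Omega_alg Sigma B) (@gens B) t2 ->
  eval (A := Omega_alg Sigma A) y t1 = eval (A := Omega_alg Sigma A) y t2.
Proof.
move=> H; apply: omega_ext => j; rewrite !ocomp_eval.
pose yj (b : B) : valg j := ocomp (y b) j.
pose Sub := gsub (T := valg j) yj.
pose gB : B -> Sub := @gsub_gen (valg j) B yj.
have fin : exists l : list Sub, forall s, List.In s l.
  apply: (@fin_inj Sub ('I_(vn j)) (fun s => sval s)) => s1 s2 E; exact: sig_eq.
have [k [enc [dec [encK [decK [ehom egen]]]]]] :=
  @to_vindex B Sub gB (gsub_sat (@vsat _ _ _ j)) (@gsub_generated (valg j) B yj) fin.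
have Hk := congr1 (fun x => ocomp x k) H; simpl in Hk; rewrite !ocomp_eval in Hk.
have E : forall t, eval (A := valg k) (fun b => ocomp (@gens B b) k) t = enc (eval gB t).
  by move=> t; rewrite (eval_hom ehom); apply: eval_ext => b; rewrite egen.
rewrite !E in Hk.
have := can_inj encK Hk => /(congr1 (@proj1_sig _ _)).
by rewrite /gB !gsub_eval.
Qed.

Lemma omega_free (B A : finType) (y : B -> omega Sigma A) :
  exists phi : omega Sigma B -> omega Sigma A,
    is_hom (A := Omega_alg Sigma B) (B := Omega_alg Sigma A) phi /\
    (forall b, phi (gens b) = y b).
Proof.
pose tm (x : omega Sigma B) := proj1_sig (constructive_indefinite_description _ (omega_gen x)).
have tmP : forall x, eval (A := Omega_alg Sigma B) (@gens B) (tm x) = x.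
  by move=> x; rewrite /tm; case: constructive_indefinite_description.
exists (fun x => eval (A := Omega_alg Sigma A) y (tm x)); split.
- move=> o args.
  transitivity (eval (A := Omega_alg Sigma A) y (@App _ _ o (fun i => tm (args i)))); last by [].
  apply: free_wd; rewrite tmP /=.
  have -> : (fun i => eval (A := Omega_alg Sigma B) (@gens B) (tm (args i))) = args.
    by apply: functional_extensionality => i; rewrite tmP.
  by [].
- move=> b; transitivity (eval (A := Omega_alg Sigma A) y (Var L b)); last by [].
  by apply: free_wd; rewrite tmP.
Qed.


Section Prov.
Variables (Gamma : pseudo_set Sigma) (A : finType).

Lemma provable_ind2 (R : omega Sigma A -> omega Sigma A -> Prop) :
  (forall x, R x x) -> (forall x y : omega Sigma A, gamma0 Gamma x y -> R x y) ->
  (forall x y z, R x y -> R y z -> R x z) ->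
  (forall u v, (forall F, exists u' v', R u' v' /\ agree F u u' /\ agree F v v') -> R u v) ->
  forall x y : omega Sigma A, provable Gamma x y -> R x y.
Proof.
move=> Hr Hb Ht Hc; fix IH 3 => x y p.
destruct p as [z|x' y' g|x' y' z' p1 p2|u v H].
- exact: Hr.
- exact: Hb.
- exact: Ht (IH _ _ p1) (IH _ _ p2).
- apply: Hc => F; destruct (H F) as [u' [v' [pp [a1 a2]]]].
  exists u', v'; split; [exact: (IH _ _ pp) | by split].
Qed.

Lemma gamma0_sym (x y : omega Sigma A) : gamma0 Gamma x y -> gamma0 Gamma y x.
Proof.
case=> B [u [v [H [phi [hphi [n [t [w [ex ey]]]]]]]]].
exists B, v, u; split; first by case: H; [right|left].
by exists phi; split=> //; exists n, t, w; split.
Qed.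

Lemma provable_sym (x y : omega Sigma A) : provable Gamma x y -> provable Gamma y x.
Proof.
move: x y; apply: (provable_ind2 (R := fun x y => provable Gamma y x)).
- move=> x; exact: pv_refl.
- move=> x y /gamma0_sym; exact: pv_base.
- move=> x y z h1 h2; exact: pv_trans h2 h1.
- move=> u v H; apply: pv_clos => F; have [u' [v' [h [a1 a2]]]] := H F.
  by exists v', u'.
Qed.

Definition env n (x : omega Sigma A) (w : 'I_n -> omega Sigma A) (z : option 'I_n) :
  omega Sigma A := match z with None => x | Some i => w i end.

Definition Wf n m (w0 : 'I_n -> omega Sigma A) (w : 'I_m -> omega Sigma A)
  (i : 'I_(n + m)) : omega Sigma A :=
  match split i with inl a => w0 a | inr b => w b end.

Definition sig0 n m (t0 : term L (option 'I_n)) (z : option 'I_m) : term L (option 'I_(n + m)) :=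
  match z with
  | None => subst (fun z' => Var L (option_map (lshift m) z')) t0
  | Some b => Var L (Some (rshift n b)) end.

Lemma pol_compose n m (p : omega Sigma A) (w0 : 'I_n -> omega Sigma A)
  (w : 'I_m -> omega Sigma A) t0 t :
  eval (A := Omega_alg Sigma A) (env (eval (A := Omega_alg Sigma A) (env p w0) t0) w) t =
  eval (A := Omega_alg Sigma A) (env p (Wf w0 w)) (subst (sig0 t0) t).
Proof.
rewrite eval_subst; apply: (@eval_ext _ (Omega_alg Sigma A)) => [[b|]] /=.
- rewrite /Wf; have -> : split (rshift n b) = inr b := unsplitK (inr b); by [].
- rewrite eval_subst; apply: (@eval_ext _ (Omega_alg Sigma A)) => [[a|]] //=.
  rewrite /Wf; have -> : split (lshift m a) = inl a := unsplitK (inl a); by [].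
Qed.

Lemma gamma0_pol (x y : omega Sigma A) m (t : term L (option 'I_m)) (w : 'I_m -> omega Sigma A) :
  gamma0 Gamma x y ->
  gamma0 Gamma (eval (A := Omega_alg Sigma A) (env x w) t) (eval (A := Omega_alg Sigma A) (env y w) t).
Proof.
case=> B [u [v [H [phi [hphi [n [t0 [w0 [ex ey]]]]]]]]].
exists B, u, v; split=> //; exists phi; split=> //.
exists (n + m), (subst (sig0 t0) t), (Wf w0 w).
rewrite ex ey; split; exact: pol_compose.
Qed.

Lemma provable_pol (x y : omega Sigma A) : provable Gamma x y -> forall m (t : term L (option 'I_m)) w,
  provable Gamma (eval (A := Omega_alg Sigma A) (env x w) t) (eval (A := Omega_alg Sigma A) (env y w) t).
Proof.
have [J0 disc] := omega_discrete A.
move: x y; apply: (provable_ind2 (R := fun x y => forall m (t : term L (option 'I_m)) w,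
  provable Gamma (eval (A := Omega_alg Sigma A) (env x w) t) (eval (A := Omega_alg Sigma A) (env y w) t))).
- move=> x m t w; exact: pv_refl.
- move=> x y g m t w; apply: pv_base; exact: gamma0_pol.
- move=> x y z h1 h2 m t w; exact: pv_trans (h1 m t w) (h2 m t w).
- move=> u v H m t w; have [u' [v' [h [a1 a2]]]] := H [:: J0].
  have eu : u = u' by apply: disc; apply: a1; left.
  have ev : v = v' by apply: disc; apply: a2; left.
  by rewrite eu ev; apply: h.
Qed.

Lemma provable_op o (xs ys : 'I_(arity o) -> omega Sigma A) :
  (forall i, provable Gamma (xs i) (ys i)) ->
  provable Gamma (@omega_op L Sigma A o xs) (@omega_op L Sigma A o ys).
Proof.
move=> H.
pose z (k : nat) (i : 'I_(arity o)) := if i < k then ys i else xs i.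
have step : forall k, provable Gamma (@omega_op L Sigma A o (z k)) (@omega_op L Sigma A o (z k.+1)).
  move=> k; case: (ltnP k (arity o)) => hk.
  - pose kk := Ordinal hk.
    pose t := @App L (option 'I_(arity o)) o
      (fun i => if i == kk then Var L None else Var L (Some i)).
    have E : forall p, eval (A := Omega_alg Sigma A) (env p (z k)) t =
        @omega_op L Sigma A o (fun i => if i == kk then p else z k i).
      move=> p; rewrite /t /=; apply: (congr1 (@omega_op L Sigma A o)).
      by apply: functional_extensionality => i; case: (i == kk).
    have e1 : (fun i => if i == kk then xs kk else z k i) = z k.
      apply: functional_extensionality => i; rewrite /z.
      case: eqP => [->|//]; by rewrite /= ltnn.
    have e2 : (fun i => if i == kk then ys kk else z k i) = z k.+1.
      apply: functional_extensionality => i; rewrite /z ltnS.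
      case: eqP => [->|ne]; first by rewrite /= leqnn.
      have hne : (i : nat) != k.
        by apply/eqP => h; apply: ne; apply: val_inj.
      by rewrite [(i <= k)%N]leq_eqVlt (negbTE hne).
    have := provable_pol (H kk) t (z k).
    by rewrite !E e1 e2.
  - have -> : z k = z k.+1.
      apply: functional_extensionality => i; rewrite /z.
      have h1 : i < k := leq_trans (ltn_ord i) hk.
      by rewrite ltnS h1 (ltnW h1).
    exact: pv_refl.
have all : forall k, provable Gamma (@omega_op L Sigma A o xs) (@omega_op L Sigma A o (z k)).
  elim=> [|k IH].
  - have -> : z 0 = xs by apply: functional_extensionality => i; rewrite /z ltn0.
    exact: pv_refl.
  - exact: pv_trans IH (step k).
have ez : z (arity o) = ys by apply: functional_extensionality => i; rewrite /z ltn_ord.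
by rewrite -ez; exact: all.
Qed.

End Prov.


Lemma quotient (S : algebra L) (theta : S -> S -> Prop) :
  satisfies S Sigma -> (exists l : list S, forall x, List.In x l) ->
  (forall x, theta x x) -> (forall x y, theta x y -> theta y x) ->
  (forall x y z, theta x y -> theta y z -> theta x z) ->
  (forall o (xs ys : 'I_(arity o) -> S), (forall i, theta (xs i) (ys i)) ->
     theta (@interp _ S o xs) (@interp _ S o ys)) ->
  exists (Q : finalgebra L) (q : S -> Q), is_hom (A := S) (B := Q) q /\
    (forall x y, q x = q y <-> theta x y) /\ (forall z : Q, exists x, q x = z) /\
    satisfies Q Sigma.
Proof.
move=> hS [l hl] hr hsym htr hcong.
pose n := size l.
pose q0 (x : S) : {set 'I_n} := [set i : 'I_n | pb (theta x (nth x l i))].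
have q0E : forall x y, q0 x = q0 y <-> theta x y.
  move=> x y; split.
  - move=> E.
    have xin : (x : ceq S) \in (l : seq (ceq S)) by apply/In_mem.
    have hi : index (x : ceq S) (l : seq (ceq S)) < n by rewrite index_mem.
    have hnth : nth x l (index (x : ceq S) (l : seq (ceq S))) = x.
      exact: (nth_index (x : ceq S) xin).
    have : Ordinal hi \in q0 x by rewrite inE; apply/pbP; rewrite /= hnth.
    rewrite E inE => /pbP /=; rewrite (set_nth_default x y hi) hnth.
    exact: hsym.
  - move=> hxy; apply/setP => i; rewrite !inE (set_nth_default x y (ltn_ord i)).
    case: pbP => h1; case: pbP => h2 //; exfalso.
    + by apply: h2; exact: htr (hsym _ _ hxy) h1.
    + by apply: h1; exact: htr hxy h2.
pose P : pred {set 'I_n} := fun B => pb (exists x, q0 x = B).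
pose C := @fsig _ P.
have qP : forall x, P (q0 x) by move=> x; apply/pbP; exists x.
pose q (x : S) : C := exist _ (q0 x) (qP x).
have pickP : forall c : C, exists x, q0 x = sval c.
  by move=> c; apply/pbP; exact: (svalP c).
pose pick (c : C) : S := proj1_sig (constructive_indefinite_description _ (pickP c)).
have pickK : forall c, q (pick c) = c.
  move=> c; apply: sig_eq => /=; rewrite /pick.
  by case: constructive_indefinite_description.
have qE : forall x y, q x = q y <-> theta x y.
  move=> x y; rewrite -q0E; split => [/(congr1 (@proj1_sig _ _))//|E]; exact: sig_eq.
pose Q := @FinAlgebra L C (fun o args => q (@interp _ S o (fun i => pick (args i)))).
have qhom : is_hom (A := S) (B := Q) q.
  move=> o xs /=; apply/qE; apply: hcong => i.
  by apply/qE; rewrite pickK.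
exists Q, q; split; [exact: qhom | split; [exact: qE | split]].
- by move=> c; exists (pick c); exact: pickK.
- move=> p hp e.
  have -> : e = (fun x => q (pick (e x))).
    by apply: functional_extensionality => x; rewrite pickK.
  rewrite -!(eval_hom qhom); congr q; exact: hS.
Qed.

Lemma main_strong : strong Sigma.
Proof.
move=> Gamma A u v H.
have [J0 disc] := omega_discrete A.
have [l hl] := omega_fin A.
have [Q [q [qhom [qE [qsurj qsat]]]]] :=
  @quotient (Omega_alg Sigma A) (provable Gamma (A := A)) (@Omega_sat A)
    (ex_intro _ l hl) (@pv_refl _ _ Gamma A) (@provable_sym Gamma A)
    (@pv_trans _ _ Gamma A) (@provable_op Gamma A).
apply/qE.
have hc : continuous_to q.
  move=> x; exists [:: J0] => y' ag; rewrite (disc y' x) //.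
  by symmetry; apply: ag; left.
have hm : models Gamma Q.
  split=> // B u' v' hg f fhom _.
  pose y (b : B) := proj1_sig (constructive_indefinite_description _ (qsurj (f (gens b)))).
  have yP : forall b, q (y b) = f (gens b).
    by move=> b; rewrite /y; case: constructive_indefinite_description.
  have [phi [phom pgen]] := omega_free y.
  have [JB discB] := omega_discrete B.
  have fE : forall x, f x = q (phi x).
    move=> x; have [t <-] := omega_gen x.
    rewrite (eval_hom fhom) (eval_hom phom) (eval_hom qhom).
    by apply: (@eval_ext _ (alg_of_fin Q)) => b; rewrite pgen yP.
  rewrite !fE; apply/qE; apply: pv_base.
  exists B, u', v'; split; first by left.
  exists phi; split; first split => //.
  + move=> x j; exists [:: JB] => y' ag; rewrite (discB y' x) //.
    by symmetry; apply: ag; left.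
  + by exists 0, (Var L None), (fun _ => phi u'); split.
exact: (H Q hm q qhom hc).
Qed.

End Pseudo.
End UA.

Theorem theorem5p2 (L : signature) (Sigma : identity L -> Prop) :
  locally_finite Sigma -> strong Sigma.
Proof. by move=> h; exact: main_strong. Qed.
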